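(* Let $\mathcal{H}=\mathcal{H}_h\oplus\mathcal{H}_h$ with basis $|l,m\rangle_\pm$, representation $\pi=\pi_+\oplus\pi_-$ of $\mathcal{A}(S^2_q)$, and let $D$ be the self-adjoint operator $D|l,m\rangle_\pm=(l+\frac12)|l,m\rangle_\mp$. Then for every $x\in\mathcal{A}(S^2_q)$ the commutator $[D,\pi(x)]$ is bounded.
   Context: $0<q\le1$ and $[x]:=\frac{q^x-q^{-x}}{q-q^{-1}}$. $\mathcal{A}(S^2_q)$ is the $*$-algebra generated by $a,a^*,b=b^*$ with $ba=q^2ab$, $a^*b=q^2ba^*$, $a^*a+b^2=1$, $q^2aa^*+q^{-2}b^2=q^2$. $\mathcal{H}_h=\bigoplus_{l=\frac12,\frac32,\dots}V_l$, $V_l$ with orthonormal basis $|l,m\rangle$, $m=-l,\dots,l$; $|l,m\rangle_\pm$ denote the basis vectors of the two copies in $\mathcal{H}$. The representations $\pi_\pm$ on $\mathcal{H}_h$ are given by $\pi_\pm(a)|l,m\rangle=\pm(1+q^2)\frac{q^{m-\frac12}}{[2l][2l+2]}\sqrt{[l+m+1][l-m]}|l,m+1\rangle+\frac{q^{m-l-\frac12}}{[2l+2]}\sqrt{[l+m+1][l+m+2]}|l+1,m+1\rangle-\frac{q^{m+l+\frac12}}{[2l]}\sqrt{[l-m][l-m-1]}|l-1,m\rangle$, $\pi_\pm(b)|l,m\rangle=\pm\frac{[l-m+1][l+m]-q^2[l-m][l+m+1]}{[2l][2l+2]}|l,m\rangle-\frac{q^{m+1}}{[2l+2]}\sqrt{[l-m+1][l+m+1]}|l+1,m\rangle-\frac{q^{m+1}}{[2l]}\sqrt{[l-m][l+m]}|l-1,m\rangle$,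 $\pi_\pm(a^* )=\pi_\pm(a)^*$ (vectors with $|m|>l$ or $l<\frac12$ are zero). *)

(* Defs.v *)
From mathcomp Require Import all_boot all_algebra.
From mathcomp Require Import complex.
From mathcomp Require Import reals exp.
Set Implicit Arguments. Unset Strict Implicit. Unset Printing Implicit Defensive.
Import GRing.Theory Num.Theory.
Local Open Scope ring_scope.
Local Open Scope complex_scope.

Section Podles.
Variables (R : realType) (q : R).

Definition qnum (x : R) : R :=
  if q == 1 then x else (q `^ x - q `^ (- x)) / (q - q^-1).

(* Basis index: sign s (true = '+', false = '-'), and integers j, t with
   l = j + 1/2, m = t + 1/2.  Valid iff l >= 1/2 and |m| <= l,
   i.e. 0 <= j and -j-1 <= t <= j. *)
Definition valid (j t : int) : bool := (0 <= j) && (- j - 1 <= t) && (t <= j).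

Definition vect := bool -> int -> int -> R[i].

(* reading a coordinate, with |l,m> = 0 for invalid (l,m) *)
Definition ev (v : vect) (s : bool) (j t : int) : R[i] :=
  if valid j t then v s j t else 0.

Definition lof (j : int) : R := j%:~R + 2^-1.
Definition mof (t : int) : R := t%:~R + 2^-1.
Definition sgn (s : bool) : R := if s then 1 else -1.

(* coefficients of pi_s(a)|l,m> *)
Definition ca1 s j t : R := let l := lof j in let m := mof t in
  sgn s * (1 + q ^+ 2) * q `^ (m - 2^-1) / (qnum (2 * l) * qnum (2 * l + 2))
  * Num.sqrt (qnum (l + m + 1) * qnum (l - m)).        (* -> |l, m+1> *)
Definition ca2 j t : R := let l := lof j in let m := mof t in
  q `^ (m - l - 2^-1) / qnum (2 * l + 2)
  * Num.sqrt (qnum (l + m + 1) * qnum (l + m + 2)).    (* -> |l+1, m+1> *)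
Definition ca3 j t : R := let l := lof j in let m := mof t in
  - (q `^ (m + l + 2^-1) / qnum (2 * l))
  * Num.sqrt (qnum (l - m) * qnum (l - m - 1)).        (* -> |l-1, m> *)

(* coefficients of pi_s(b)|l,m> *)
Definition cb0 s j t : R := let l := lof j in let m := mof t in
  sgn s * (qnum (l - m + 1) * qnum (l + m) - q ^+ 2 * qnum (l - m) * qnum (l + m + 1))
  / (qnum (2 * l) * qnum (2 * l + 2)).                 (* -> |l, m> *)
Definition cb1 j t : R := let l := lof j in let m := mof t in
  - (q `^ (m + 1) / qnum (2 * l + 2))
  * Num.sqrt (qnum (l - m + 1) * qnum (l + m + 1)).    (* -> |l+1, m> *)
Definition cb2 j t : R := let l := lof j in let m := mof t in
  - (q `^ (m + 1) / qnum (2 * l))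
  * Num.sqrt (qnum (l - m) * qnum (l + m)).            (* -> |l-1, m> *)

(* pi(a) = pi_+(a) (+) pi_-(a), written row-wise:
   (pi(a) v)(l',m') = sum over (l,m) of <l',m'|pi(a)|l,m> v(l,m). *)
Definition pi_a (v : vect) : vect := fun s j t =>
  if valid j t then
    (ca1 s j (t - 1))%:C * ev v s j (t - 1)
  + (ca2 (j - 1) (t - 1))%:C * ev v s (j - 1) (t - 1)
  + (ca3 (j + 1) t)%:C * ev v s (j + 1) t
  else 0.

(* pi(a^* ) = pi(a)^* : the (conjugate) transpose; all entries are real. *)
Definition pi_astar (v : vect) : vect := fun s j t =>
  if valid j t then
    (ca1 s j t)%:C * ev v s j (t + 1)
  + (ca2 j t)%:C * ev v s (j + 1) (t + 1)
  + (ca3 j t)%:C * ev v s (j - 1) t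
  else 0.

Definition pi_b (v : vect) : vect := fun s j t =>
  if valid j t then
    (cb0 s j t)%:C * ev v s j t
  + (cb1 (j - 1) t)%:C * ev v s (j - 1) t
  + (cb2 (j + 1) t)%:C * ev v s (j + 1) t
  else 0.

Definition Dop (v : vect) : vect := fun s j t =>
  if valid j t then (lof j + 2^-1)%:C * ev v (~~ s) j t else 0.

(* Elements of A(S^2_q): every element is a noncommutative polynomial with
   complex coefficients in the generators a, a^*, b; we range over such
   polynomial expressions (representatives). *)
Inductive poly_term : Type :=
| Ta | Tastar | Tb
| Tscal of R[i]
| Tadd of poly_term & poly_term
| Tmul of poly_term & poly_term.

Fixpoint piS (x : poly_term) (v : vect) : vect :=
  match x with
  | Ta => pi_a v
  | Tastar => pi_astar v
  | Tb => pi_b v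
  | Tscal c => fun s j t => if valid j t then c * v s j t else 0
  | Tadd x1 x2 => fun s j t => piS x1 v s j t + piS x2 v s j t
  | Tmul x1 x2 => piS x1 (piS x2 v)
  end.

Definition commutator (A B : vect -> vect) (v : vect) : vect :=
  fun s j t => A (B v) s j t - B (A v) s j t.

Definition abs2 (z : R[i]) : R := let: a +i* b := z in a ^+ 2 + b ^+ 2.

(* squared norm of the components with l < M + 1/2 *)
Definition nsq (M : nat) (v : vect) : R :=
  \sum_(s : bool) \sum_(j < M)
     \sum_(k < (2 * j + 2)%N) abs2 (v s j%:Z (k%:Z - j%:Z - 1)).

Definition fin_supp (N : nat) (v : vect) : Prop :=
  forall s (j t : int), (N%:Z <= j) -> v s j t = 0.

(* T is bounded on the dense domain of finitely supported vectors
   (the algebraic span of the |l,m>_{+-}, a core for D). *)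
Definition bounded_op (T : vect -> vect) : Prop :=
  exists C : R, forall (N : nat) (v : vect), fin_supp N v ->
    forall M : nat, nsq M (T v) <= C * nsq N v.

End Podles.

(* Main.v *)
Require Import Defs.
From mathcomp Require Import all_boot all_order all_algebra.
From mathcomp Require Import complex.
From mathcomp Require Import reals exp.
From mathcomp Require Import ring lra zify.
From Stdlib Require Import FunctionalExtensionality.
Import Order.TTheory GRing.Theory Num.Theory.
Local Open Scope ring_scope.
Set Implicit Arguments. Unset Strict Implicit. Unset Printing Implicit Defensive.

Definition idxs (M : nat) : seq (int * int) :=
  [seq (j%:Z, k%:Z - j%:Z - 1) | j <- iota 0 M, k <- iota 0 (2 * j + 2)].

Lemma idxs_uniq M : uniq (idxs M).
Proof.
apply: allpairs_uniq_dep; first exact: iota_uniq.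
  by move=> x _; exact: iota_uniq.
move=> [a b] [c d] _ _ /= [] h1 h2.
have ea : a = c by lia.
subst c.
have eb : b = d by lia.
by subst d.
Qed.

Lemma idxs_mem N (j t : int) : valid j t -> j < N%:Z -> (j, t) \in idxs N.
Proof.
rewrite /valid => /andP [] /andP [] hj h1 h2 hN.
have [n en] : exists n : nat, j = n%:Z by exists (absz j); rewrite gez0_abs.
subst j.
have : (absz (t + n%:Z + 1) : int) = t + n%:Z + 1 by rewrite gez0_abs //; lia.
move: (absz (t + n%:Z + 1)) => k hk.
have -> : t = k%:Z - n%:Z - 1 by lia.
apply/allpairsPdep; exists n, k; split => //.
  rewrite mem_iota; lia.
rewrite mem_iota; lia.
Qed.

Section Ops.
Variable R : realType.
Implicit Types (z : R[i]) (v w : vect R).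
Local Open Scope complex_scope.

Lemma abs2_ge0 z : 0 <= abs2 z.
Proof. case: z => x y /=. nra. Qed.

Lemma abs2_add z (w : R[i]) : abs2 (z + w) <= 2 * abs2 z + 2 * abs2 w.
Proof. case: z => x y; case: w => u v /=. have := sqr_ge0 (x - u); have := sqr_ge0 (y - v). nra. Qed.

Lemma abs2_scal (a : R) z : abs2 (a%:C * z) = a ^+ 2 * abs2 z.
Proof. case: z => x y /=. ring. Qed.

Lemma abs2_0 : abs2 (0 : R[i]) = 0.
Proof. rewrite /abs2 /=. ring. Qed.

Lemma nsqE M v : nsq M v = \sum_(s : bool) \sum_(p <- idxs M) abs2 (v s p.1 p.2).
Proof.
apply: eq_bigr => s _.
rewrite /idxs big_allpairs_dep /=.
rewrite (_ : iota 0 M = index_iota 0 M); last by rewrite /index_iota subn0.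
rewrite big_mkord; apply: eq_bigr => j _.
rewrite (_ : iota 0 _ = index_iota 0 (2 * j + 2)); last by rewrite /index_iota subn0.
by rewrite big_mkord.
Qed.

Lemma nsq_ge0 M v : 0 <= nsq M v.
Proof. rewrite /nsq. apply: sumr_ge0 => s _; apply: sumr_ge0 => j _; apply: sumr_ge0 => k _; exact: abs2_ge0. Qed.

Lemma sum_inj (T : eqType) (r1 r2 : seq T) (f : T -> T) (g : T -> R) :
  uniq r1 -> uniq r2 -> injective f -> (forall y, 0 <= g y) ->
  (forall y, y \notin r2 -> g y = 0) ->
  \sum_(x <- r1) g (f x) <= \sum_(y <- r2) g y.
Proof.
move=> u1 u2 finj g0 gz.
rewrite -(big_map f xpredT g).
rewrite (bigID (fun y => y \in r2)) /=.
rewrite [X in _ + X]big1; last by move=> y /gz.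
rewrite addr0 -big_filter.
set s := filter _ _.
have us : uniq s by rewrite filter_uniq // map_inj_uniq.
rewrite [X in _ <= X](bigID (fun y => y \in s)) /=.
have -> : \sum_(i <- r2 | i \in s) g i = \sum_(i <- s) g i.
  rewrite -big_filter; apply: perm_big; apply: uniq_perm.
  - exact: filter_uniq.
  - exact: us.
  move=> y; rewrite mem_filter; apply/idP/idP; first by case/andP.
  move=> ys; rewrite ys /=. by move: ys; rewrite mem_filter => /andP [].
rewrite lerDl; apply: sumr_ge0 => y _; exact: g0.
Qed.

Definition Bnd (T : vect R -> vect R) :=
  exists (k : nat) (C : R), 0 <= C /\ forall N v, fin_supp N v ->
    fin_supp (N + k) (T v) /\ forall M, nsq M (T v) <= C * nsq N v.

Lemma Bnd_bounded T : Bnd T -> bounded_op T.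
Proof. move=> [k [C [_ H]]]; exists C => N v hv M; exact: (proj2 (H N v hv) M). Qed.

Definition vadd (v w : vect R) : vect R := fun s j t => v s j t + w s j t.

Lemma nsq_add M v w : nsq M (vadd v w) <= 2 * nsq M v + 2 * nsq M w.
Proof.
rewrite /nsq !mulr_sumr -big_split /=; apply: ler_sum => s _.
rewrite !mulr_sumr -big_split /=; apply: ler_sum => j _.
rewrite !mulr_sumr -big_split /=; apply: ler_sum => k _.
exact: abs2_add.
Qed.

Lemma Bnd_add T1 T2 : Bnd T1 -> Bnd T2 -> Bnd (fun v => vadd (T1 v) (T2 v)).
Proof.
move=> [k1 [C1 [hC1 H1]]] [k2 [C2 [hC2 H2]]].
exists (k1 + k2)%N, (2 * C1 + 2 * C2); split; first lra.
move=> N v hv; have [f1 b1] := H1 N v hv; have [f2 b2] := H2 N v hv; split.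
  move=> s j t hj; rewrite /vadd f1 ?f2 ?addr0 //; apply: le_trans hj; rewrite lez_nat; lia.
move=> M; apply: le_trans (nsq_add _ _ _) _.
have := b1 M; have := b2 M; have := nsq_ge0 N v; lra.
Qed.

Lemma Bnd_comp T1 T2 : Bnd T1 -> Bnd T2 -> Bnd (fun v => T1 (T2 v)).
Proof.
move=> [k1 [C1 [hC1 H1]]] [k2 [C2 [hC2 H2]]].
exists (k2 + k1)%N, (C1 * C2); split; first exact: mulr_ge0.
move=> N v hv; have [f2 b2] := H2 N v hv; have [f1 b1] := H1 _ _ f2; split.
  by rewrite addnA.
move=> M; apply: le_trans (b1 M) _; rewrite -mulrA; apply: ler_wpM2l => //; exact: b2.
Qed.

Lemma Bnd_ext T1 T2 : (forall v, T1 v = T2 v) -> Bnd T1 -> Bnd T2.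
Proof. move=> e; have -> : T1 = T2 by apply: functional_extensionality. done. Qed.

Definition shift1 (sg : bool -> bool) (c : bool -> int -> int -> R) (a b : int) v : vect R :=
  fun s j t => if valid j t then (c s j t)%:C * ev v (sg s) (j + a) (t + b) else 0.

Lemma Bnd_shift1 (sg : bool -> bool) (c : bool -> int -> int -> R) (a b : int) (K : R) : injective sg -> -1 <= a -> 0 <= K ->
  (forall s j t, valid j t -> valid (j + a) (t + b) -> c s j t ^+ 2 <= K) ->
  Bnd (shift1 sg c a b).
Proof.
move=> isg ha hK hc; exists 1%N, K; split => // N v hv; split.
  move=> s j t hj; rewrite /shift1 /ev; case: (valid j t) => //.
  case: (valid (j + a) (t + b)); last by rewrite mulr0.
  rewrite hv ?mulr0 //; rewrite PoszD in hj; lia.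
move=> M; rewrite !nsqE mulr_sumr.
set F := fun s (p : int * int) => abs2 (ev v s (p.1 + a) (p.2 + b)).
apply: (@le_trans _ _ (\sum_(s : bool) K * \sum_(p <- idxs M) F (sg s) p)).
  apply: ler_sum => s _; rewrite mulr_sumr; apply: ler_sum => [[j t]] _ /=.
  rewrite /shift1 /F /=; case hv1 : (valid j t); last by rewrite abs2_0; apply: mulr_ge0 => //; exact: abs2_ge0.
  rewrite abs2_scal; rewrite /ev; case hv2 : (valid (j + a) (t + b)).
    by apply: ler_wpM2r; [exact: abs2_ge0 | exact: hc].
  by rewrite abs2_0 !mulr0.
rewrite [X in _ <= X](reindex_inj isg) /=; apply: ler_sum => s _; apply: ler_wpM2l => //.
set g := fun p : int * int => if p \in idxs N then abs2 (v (sg s) p.1 p.2) else 0.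
apply: (@le_trans _ _ (\sum_(p <- idxs M) g ((fun p : int * int => (p.1 + a, p.2 + b)) p))).
  apply: ler_sum => [[j t]] _; rewrite /F /g /ev /=.
  case: (boolP ((j + a, t + b) \in idxs N)) => hm.
    case: (valid _ _) => //; rewrite abs2_0; exact: abs2_ge0.
  case hv3 : (valid (j + a) (t + b)); last by rewrite abs2_0.
  case: (ltP (j + a) N%:Z) => hN; first by rewrite (idxs_mem hv3 hN) in hm.
  by rewrite hv // abs2_0.
apply: (le_trans (@sum_inj _ (idxs M) (idxs N) _ _ _ _ _ _ _)); first exact: idxs_uniq.
- exact: idxs_uniq.
- by move=> [x y] [x' y'] /= [] /addIr -> /addIr ->.
- by move=> p; rewrite /g; case: ifP => _ //; exact: abs2_ge0.
- by move=> p; rewrite /g => /negbTE ->.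
by rewrite /g big_seq_cond [X in _ <= X]big_seq_cond; apply: ler_sum => p /andP [] -> _.
Qed.

End Ops.
Section Coef.
Variables (R : realType) (q : R).
Hypotheses (hq0 : 0 < q) (hq1 : q <= 1).
Local Notation e := (powR q).
Local Notation Q := (qnum q).

Lemma e_gt0 x : 0 < e x. Proof. exact: powR_gt0. Qed.
Lemma eD x y : e (x + y) = e x * e y.
Proof. apply: powRD; apply/implyP => _; exact: lt0r_neq0. Qed.
Lemma eN x : e (- x) = (e x)^-1. Proof. exact: powRN. Qed.
Lemma e1 : e 1 = q. Proof. apply: powRr1; exact: ltW. Qed.
Lemma e0 : e 0 = 1. Proof. exact: powRr0. Qed.
Lemma e_le x y : x <= y -> e y <= e x.
Proof. move=> h; apply: ger_powR => //; by rewrite hq0 hq1. Qed.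
Lemma e_le1 x : 0 <= x -> e x <= 1.
Proof. move=> h; rewrite -e0; exact: e_le. Qed.
Lemma eNe x : e x * e (- x) = 1.
Proof. rewrite eN mulfV //; exact: lt0r_neq0 (e_gt0 x). Qed.
Lemma e_sq x : e x ^+ 2 = e (2 * x).
Proof. by rewrite expr2 -eD; congr e; ring. Qed.
Lemma q2 : q ^+ 2 = e 2.
Proof. by rewrite -powR_mulrn //; exact: ltW. Qed.

Lemma e_q1 x : q = 1 -> e x = 1.
Proof. move=> ->; by rewrite powR1. Qed.

Lemma Q_q1 x : q = 1 -> Q x = x.
Proof. by move=> h; rewrite /qnum h eqxx. Qed.

Lemma Q_lt1 x : q < 1 -> Q x = (e x - e (- x)) / (q - q^-1).
Proof. by move=> h; rewrite /qnum (lt_eqF h). Qed.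

Lemma d_lt0 : q < 1 -> q - q^-1 < 0.
Proof.
move=> h; have : 1 < q^-1 by rewrite invf_gt1.
lra.
Qed.

Lemma q_cases : q < 1 \/ q = 1.
Proof. case: (ltrP q 1) => h; [by left | right; by apply/eqP; rewrite eq_le hq1 h]. Qed.

Lemma qq1 : q < 1 -> (q != 0) && (q * q - 1 != 0).
Proof. move=> h; apply/andP; split; first exact: lt0r_neq0. rewrite subr_eq0 lt_eqF //. have h1 : 0 < 1 - q by lra. have := mulr_gt0 hq0 h1. nra. Qed.

Lemma Q_I1 x : Q (x + 1) = q * Q x + e (- x).
Proof.
case: q_cases => h.
- rewrite !Q_lt1 // eD e1 opprD eD (eN 1) e1.
  have hd := d_lt0 h. have hq : q != 0 by exact: lt0r_neq0.
  field. exact: qq1.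
- rewrite !(Q_q1 _ h) !(e_q1 _ h) h; ring.
Qed.

Lemma Q_I2 x : Q (x + 1) = q^-1 * Q x + e x.
Proof.
case: q_cases => h.
- rewrite !Q_lt1 // eD e1 opprD eD (eN 1) e1.
  have hd := d_lt0 h. have hq : q != 0 by exact: lt0r_neq0.
  have hx := eNe x.
  field. exact: qq1.
- rewrite !(Q_q1 _ h) !(e_q1 _ h) h invr1; ring.
Qed.

Lemma QM a n : a <= n -> e a * Q a <= e n * Q n.
Proof.
move=> han; case: q_cases => h.
- rewrite !Q_lt1 //.
  have hd := d_lt0 h.
  have ha := eNe a; have hn := eNe n.
  have hle := e_le han; have hpa := e_gt0 a; have hpn := e_gt0 n.
  move: (e a) (e (- a)) (e n) (e (- n)) ha hn hle hpa hpn => A A' N N' ha hn hle hpa hpn.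
  have -> : A * ((A - A') / (q - q^-1)) = (A * A - 1) * (q - q^-1)^-1.
    by rewrite -ha; rewrite mulrA mulrBr.
  have -> : N * ((N - N') / (q - q^-1)) = (N * N - 1) * (q - q^-1)^-1.
    by rewrite -hn; rewrite mulrA mulrBr.
  have hdi : (q - q^-1)^-1 < 0 by rewrite invr_lt0.
  move: ((q - q^-1)^-1) hdi => di hdi.
  have h1 : 0 <= A * A - N * N by nra.
  have h2 : 0 <= - di by lra.
  have := mulr_ge0 h1 h2. nra.
- by rewrite !(Q_q1 _ h) !(e_q1 _ h) !mul1r.
Qed.

Lemma Qpos x : 0 <= x -> 0 <= Q x.
Proof.
move=> hx; case: q_cases => h.
- rewrite Q_lt1 //.
  have hd := d_lt0 h.
  have h1 := e_le1 hx.
  have h2 : e 0 <= e (- x) by apply: e_le; lra.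
  rewrite e0 in h2.
  apply: mulr_le0; first lra.
  by rewrite invr_le0; apply: ltW.
- by rewrite (Q_q1 _ h).
Qed.

Lemma Qmono a n : 0 <= a -> a <= n -> Q a <= Q n.
Proof.
move=> ha han.
have h1 := QM han.
have hQn : 0 <= Q n by apply: Qpos; lra.
have hQa : Q a = e (- a) * (e a * Q a) by rewrite mulrA [e (- a) * e a]mulrC eNe mul1r.
have hen : e (- a) * e n <= 1 by rewrite -eD; apply: e_le1; lra.
have hpa := e_gt0 (- a).
rewrite hQa.
apply: (le_trans (y := e (- a) * (e n * Q n))).
  by apply: ler_wpM2l => //; exact: ltW.
have hE0 : 0 <= e (- a) * e n by apply: mulr_ge0; apply: ltW; apply: e_gt0.
rewrite mulrA; move: (e (-a) * e n) hen hE0 => E hE hE0.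
nra.
Qed.

Lemma Q0 : Q 0 = 0.
Proof.
case: q_cases => h; last by rewrite (Q_q1 _ h).
by rewrite Q_lt1 // oppr0 subrr mul0r.
Qed.

Lemma Q1 : Q 1 = 1.
Proof.
case: q_cases => h; last by rewrite (Q_q1 _ h).
by rewrite Q_lt1 // eN e1 divff // (lt_eqF (d_lt0 h)).
Qed.

Lemma e_sum2 y : 2 <= e y + e (- y).
Proof.
have h := eNe y; have hp := e_gt0 y; have hp' := e_gt0 (- y).
move: (e y) (e (- y)) h hp hp' => E E' h hp hp'.
have := sqr_ge0 (E - E'). nra.
Qed.

Lemma Q_step x : Q (x + 2) = Q x + e (x + 1) + e (- (x + 1)).
Proof.
have -> : x + 2 = (x + 1) + 1 by ring.
rewrite Q_I1 Q_I2 eD e1.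
have hq : q != 0 by exact: lt0r_neq0.
rewrite mulrDr mulrA mulfV // mul1r; ring.
Qed.

Lemma QG2 (n : nat) : n%:R <= Q n%:R /\ n.+1%:R <= Q n.+1%:R.
Proof.
elim: n => [|n [IH1 IH2]].
  by rewrite Q0 Q1.
split => //.
rewrite -[n.+2]addn2 natrD Q_step.
have := e_sum2 (n%:R + 1). lra.
Qed.

Lemma QG (n : nat) : n%:R <= Q n%:R.
Proof. exact: (QG2 n).1. Qed.

Lemma eQ_ge0 x : 0 <= x -> 0 <= e x * Q x.
Proof. move=> hx; apply: mulr_ge0; [exact: ltW (e_gt0 x) | exact: Qpos]. Qed.

Lemma PB3 x y N z : 0 <= x -> 0 <= y -> x <= N -> y <= N -> x + y - 2 * N <= z ->
  e z * (Q x * Q y) <= Q N ^+ 2.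
Proof.
move=> hx hy hxN hyN hz.
have h1 := ler_pM (eQ_ge0 hx) (eQ_ge0 hy) (QM hxN) (QM hyN).
have hz' := e_le hz.
have E1 : e (x + y - 2 * N) = e x * e y * e (- (2 * N)) by rewrite -!eD.
have E2 : e N * e N * e (- (2 * N)) = 1.
  by rewrite -!eD (_ : N + N + - (2 * N) = 0) ?e0 //; ring.
have hQ : 0 <= Q x * Q y by apply: mulr_ge0; apply: Qpos.
apply: (le_trans (y := e (x + y - 2 * N) * (Q x * Q y))).
  by apply: ler_wpM2r.
have hm : 0 <= e (- (2 * N)) by exact: ltW (e_gt0 _).
have := ler_wpM2l hm h1.
have -> : e (- (2 * N)) * (e N * Q N * (e N * Q N)) = Q N ^+ 2.
  transitivity ((e N * e N * e (- (2 * N))) * Q N ^+ 2); first ring.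
  by rewrite E2 mul1r.
by rewrite E1 => h; apply: le_trans h; rewrite le_eqVlt; apply/orP; left; apply/eqP; ring.
Qed.

Lemma sq_frac (A B C : R) : (A / B * C) ^+ 2 = A ^+ 2 * C ^+ 2 / B ^+ 2.
Proof. rewrite !exprMn exprVn; ring. Qed.

Lemma sq_fracN (A B C : R) : (- (A / B) * C) ^+ 2 = A ^+ 2 * C ^+ 2 / B ^+ 2.
Proof. rewrite mulNr sqrrN; exact: sq_frac. Qed.

Lemma Q_ge1 N : 1 <= N -> 1 <= Q N.
Proof. move=> h; rewrite -Q1; apply: Qmono => //; lra. Qed.

Lemma frac_le1_l (X B : R) : 0 < B -> X <= B -> X / B <= 1.
Proof. move=> hB hX; rewrite ler_pdivrMr ?mul1r //. Qed.

Lemma frac_le1 (X B : R) : 0 < B -> X <= B ^+ 2 -> X / B ^+ 2 <= 1.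
Proof. move=> hB hX; rewrite ler_pdivrMr ?mul1r //; exact: exprn_gt0. Qed.

Lemma coefS_b (w x y N : R) : 1 <= N -> 0 <= x -> 0 <= y -> x <= N -> y <= N -> x + y - 2 * N <= 2 * w ->
  (e w / Q N * Num.sqrt (Q x * Q y)) ^+ 2 <= 1.
Proof.
move=> hN hx hy hxN hyN hw.
have hQN := Q_ge1 hN.
rewrite sq_frac sqr_sqrtr; last by apply: mulr_ge0; apply: Qpos.
apply: frac_le1; first lra.
by rewrite e_sq; apply: PB3.
Qed.

Lemma coefSN_b (w x y N : R) : 1 <= N -> 0 <= x -> 0 <= y -> x <= N -> y <= N -> x + y - 2 * N <= 2 * w ->
  (- (e w / Q N) * Num.sqrt (Q x * Q y)) ^+ 2 <= 1.
Proof. by move=> *; rewrite mulNr sqrrN; apply: coefS_b. Qed.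

Lemma valid_j (j t : int) : valid j t -> 0 <= j.
Proof. by case/andP => /andP []. Qed.

Lemma valid_lm j t : valid j t -> 2^-1 <= lof R j /\ - lof R j <= mof R t /\ mof R t <= lof R j.
Proof.
case/andP => /andP [] h0 h1 h2.
have e0 : (0 : R) <= j%:~R by rewrite ler0z.
have e1 : ((- j - 1)%:~R : R) <= t%:~R by rewrite ler_int.
have e2 : (t%:~R : R) <= j%:~R by rewrite ler_int.
rewrite intrB intrN in e1.
rewrite /lof /mof; split; first lra. split; lra.
Qed.

Lemma mofD1 t : mof R (t + 1) = mof R t + 1.
Proof. rewrite /mof intrD; ring. Qed.
Lemma lofB1' j : lof R (j - 1) = lof R j - 1.
Proof. rewrite /lof intrB; ring. Qed.

Lemma ca2_bound j t : valid j t -> ca2 q j t ^+ 2 <= 1.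
Proof.
move=> hv; have [hl [hm1 hm2]] := valid_lm hv.
rewrite /ca2 /=; apply: coefS_b; lra.
Qed.

Lemma cb1_bound j t : valid j t -> cb1 q j t ^+ 2 <= 1.
Proof.
move=> hv; have [hl [hm1 hm2]] := valid_lm hv.
rewrite /cb1 /=; apply: coefSN_b; lra.
Qed.

Lemma cb2_bound j t : valid j t -> cb2 q j t ^+ 2 <= 1.
Proof.
move=> hv; have [hl [hm1 hm2]] := valid_lm hv.
rewrite /cb2 /=; apply: coefSN_b; lra.
Qed.

Lemma ca3_bound j t : valid j t -> valid (j - 1) t -> ca3 q j t ^+ 2 <= 1.
Proof.
move=> hv hv'; have [hl [hm1 hm2]] := valid_lm hv.
have [_ [_ hm3]] := valid_lm hv'; rewrite lofB1' in hm3.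
rewrite /ca3 /=; apply: coefSN_b; lra.
Qed.

Lemma lof_G j : 0 <= j -> 2 * lof R j <= Q (2 * lof R j) /\ 2 * lof R j + 2 <= Q (2 * lof R j + 2).
Proof.
move=> hj.
have [n ->] : exists n : nat, j = n%:Z by exists (absz j); rewrite gez0_abs.
have e1 : 2 * lof R n%:Z = (2 * n + 1)%N%:R.
  by rewrite /lof natrD natrM (_ : ((Posz n)%:~R : R) = n%:R) //; field.
have e2 : 2 * lof R n%:Z + 2 = (2 * n + 3)%N%:R.
  by rewrite /lof natrD natrM (_ : ((Posz n)%:~R : R) = n%:R) //; field.
by rewrite e2 e1; split; apply: QG.
Qed.

Lemma sgn_sq s : sgn R s ^+ 2 = 1.
Proof. by case: s; rewrite /sgn ?sqrrN expr1n. Qed.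

Lemma ca1_real (sg l m : R) : sg ^+ 2 = 1 -> 2^-1 <= l -> - l <= m -> m + 1 <= l ->
  2 * l <= Q (2 * l) ->
  l ^+ 2 * (sg * (1 + q ^+ 2) * e (m - 2^-1) / (Q (2 * l) * Q (2 * l + 2))
     * Num.sqrt (Q (l + m + 1) * Q (l - m))) ^+ 2 <= 1.
Proof.
move=> hsg hl hm1 hm2 hG.
rewrite sq_frac sqr_sqrtr; last by apply: mulr_ge0; apply: Qpos; lra.
have hQ2l : 1 <= Q (2 * l) by lra.
have hQ22 : 1 <= Q (2 * l + 2) by apply: Q_ge1; lra.
have hQ2 : Q (2 * l + 1) <= Q (2 * l + 2) by apply: Qmono; lra.
have hQ1 : 0 <= Q (2 * l + 1) by apply: Qpos; lra.
have hT : e (2 * (m - 2^-1)) * (Q (l + m + 1) * Q (l - m)) <= Q (2 * l + 1) ^+ 2.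
  apply: PB3; lra.
have hT0 : 0 <= e (2 * (m - 2^-1)) * (Q (l + m + 1) * Q (l - m)).
  apply: mulr_ge0; first exact: ltW (e_gt0 _).
  by apply: mulr_ge0; apply: Qpos; lra.
have hq2 : q ^+ 2 <= 1 by rewrite expr_le1 //; exact: ltW.
have hq20 : 0 <= q ^+ 2 by exact: sqr_ge0.
have hS : (1 + q ^+ 2) ^+ 2 <= 4.
  move: (q ^+ 2) hq2 hq20 => x h1 h2; have h3 : 0 <= 1 - x by lra. have := mulr_ge0 h2 h3. nra.
have hS0 : 0 <= (1 + q ^+ 2) ^+ 2 by exact: sqr_ge0.
have hB : 0 < (Q (2 * l) * Q (2 * l + 2)) ^+ 2.
  apply: exprn_gt0; apply: mulr_gt0; lra.
rewrite mulrA; apply: frac_le1_l => //.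
have -> : l ^+ 2 * ((sg * (1 + q ^+ 2) * e (m - 2^-1)) ^+ 2 * (Q (l + m + 1) * Q (l - m)))
   = l ^+ 2 * ((1 + q ^+ 2) ^+ 2 * (e (2 * (m - 2^-1)) * (Q (l + m + 1) * Q (l - m)))).
  by rewrite -e_sq !exprMn hsg; ring.
move: hT hT0; set T := e _ * _ => hT hT0.
have hV : Q (2 * l + 1) ^+ 2 <= Q (2 * l + 2) ^+ 2 by rewrite ler_sqr ?nnegrE //; lra.
have h1 := ler_pM hS0 hT0 hS (le_trans hT hV).
have hZ : 4 * l ^+ 2 <= Q (2 * l) ^+ 2 by nra.
have hl2 : 0 <= l ^+ 2 by exact: sqr_ge0.
have h2 := ler_wpM2l hl2 h1.
apply: (le_trans h2); rewrite exprMn.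
have hV0 : 0 <= Q (2 * l + 2) ^+ 2 by exact: sqr_ge0.
nra.
Qed.

Lemma ca1_bound s j t : valid j t -> valid j (t + 1) -> lof R j ^+ 2 * ca1 q s j t ^+ 2 <= 1.
Proof.
move=> hv hv'; have [hl [hm1 hm2]] := valid_lm hv.
have [_ [_ hm3]] := valid_lm hv'; rewrite mofD1 in hm3.
have [hG _] := lof_G (valid_j hv).
rewrite /ca1 /=; apply: ca1_real => //; exact: sgn_sq.
Qed.

Lemma cb0_num a b : 0 <= a -> 0 <= b ->
  Q (b + 1) * Q a - q ^+ 2 * Q b * Q (a + 1) = e (- b) * Q a - e (a + 2) * Q b.
Proof.
move=> ha hb; rewrite Q_I1 Q_I2 (_ : e (a + 2) = q ^+ 2 * e a); last by rewrite eD q2 mulrC.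
have hq : q != 0 by exact: lt0r_neq0.
by field.
Qed.

Lemma cb0_real (sg l m : R) : sg ^+ 2 = 1 -> 2^-1 <= l -> - l <= m -> m <= l ->
  2 * l + 2 <= Q (2 * l + 2) ->
  (l + 1) ^+ 2 * (sg * (Q (l - m + 1) * Q (l + m) - q ^+ 2 * Q (l - m) * Q (l + m + 1))
     / (Q (2 * l) * Q (2 * l + 2))) ^+ 2 <= 1.
Proof.
move=> hsg hl hm1 hm2 hG.
rewrite cb0_num; try lra.
have hQ2l : 1 <= Q (2 * l) by apply: Q_ge1; lra.
have hQ22 : 1 <= Q (2 * l + 2) by apply: Q_ge1; lra.
have hX0 : 0 <= e (- (l - m)) * Q (l + m).
  apply: mulr_ge0; first exact: ltW (e_gt0 _). by apply: Qpos; lra.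
have hX : e (- (l - m)) * Q (l + m) <= Q (2 * l).
  have h1 : e (l + m) * Q (l + m) <= e (2 * l) * Q (2 * l) by apply: QM; lra.
  have h2 := ler_wpM2l (ltW (e_gt0 (- (2 * l)))) h1.
  have E1 : e (- (l - m)) = e (- (2 * l)) * e (l + m) by rewrite -eD; congr e; ring.
  have E2 : e (- (2 * l)) * e (2 * l) = 1 by rewrite -eD (_ : - (2 * l) + 2 * l = 0) ?e0 //; ring.
  rewrite E1 -mulrA; apply: (le_trans h2).
  by rewrite mulrA E2 mul1r.
have hY0 : 0 <= e (l + m + 2) * Q (l - m).
  apply: mulr_ge0; first exact: ltW (e_gt0 _). by apply: Qpos; lra.
have hY : e (l + m + 2) * Q (l - m) <= Q (2 * l).
  have h1 : e (l + m + 2) <= 1 by apply: e_le1; lra.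
  have h2 : Q (l - m) <= Q (2 * l) by apply: Qmono; lra.
  have h3 : 0 <= Q (l - m) by apply: Qpos; lra.
  nra.
move: hX0 hX hY0 hY; set X := e _ * Q _; set Y := e _ * Q _ => hX0 hX hY0 hY.
have hN : (X - Y) ^+ 2 <= Q (2 * l) ^+ 2 by nra.
rewrite expr_div_n exprMn hsg mul1r mulrA.
have hB : 0 < (Q (2 * l) * Q (2 * l + 2)) ^+ 2.
  apply: exprn_gt0; apply: mulr_gt0; lra.
apply: frac_le1_l => //.
have hL : (l + 1) ^+ 2 <= Q (2 * l + 2) ^+ 2 by nra.
have hl0 : 0 <= (l + 1) ^+ 2 by exact: sqr_ge0.
have := ler_pM hl0 (sqr_ge0 (X - Y)) hL hN.
by rewrite exprMn [Q (2 * l) ^+ 2 * _]mulrC.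
Qed.

Lemma cb0_bound s j t : valid j t -> (lof R j + 1) ^+ 2 * cb0 q s j t ^+ 2 <= 1.
Proof.
move=> hv; have [hl [hm1 hm2]] := valid_lm hv.
have [_ hG] := lof_G (valid_j hv).
rewrite /cb0 /=; apply: cb0_real => //; exact: sgn_sq.
Qed.

End Coef.

Section Alg.
Variables (R : realType) (q : R).
Local Open Scope complex_scope.
Implicit Types (v w : vect R).

Hypothesis ca1_b : forall s j t, valid j t -> valid j (t + 1) -> lof R j ^+ 2 * ca1 q s j t ^+ 2 <= 1.
Hypothesis ca2_b : forall j t, valid j t -> ca2 q j t ^+ 2 <= 1.
Hypothesis ca3_b : forall j t, valid j t -> valid (j - 1) t -> ca3 q j t ^+ 2 <= 1.
Hypothesis cb0_b : forall s j t, valid j t -> (lof R j + 1) ^+ 2 * cb0 q s j t ^+ 2 <= 1.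
Hypothesis cb1_b : forall j t, valid j t -> cb1 q j t ^+ 2 <= 1.
Hypothesis cb2_b : forall j t, valid j t -> cb2 q j t ^+ 2 <= 1.

Lemma ca1_neg s j t : ca1 q (~~ s) j t = - ca1 q s j t.
Proof. rewrite /ca1 /sgn; case: s => /=; ring. Qed.
Lemma cb0_neg s j t : cb0 q (~~ s) j t = - cb0 q s j t.
Proof. rewrite /cb0 /sgn; case: s => /=; ring. Qed.


Lemma lof_ge (j : int) : 0 <= j -> 2^-1 <= lof R j.
Proof. move=> hj; rewrite /lof; have : (0 : R) <= j%:~R by rewrite ler0z. lra. Qed.

Lemma lofB1 (j : int) : lof R j - lof R (j - 1) = 1.
Proof. rewrite /lof intrB; ring. Qed.
Lemma lofD1 (j : int) : lof R j - lof R (j + 1) = -1.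
Proof. rewrite /lof intrD; ring. Qed.

Lemma ca1_b' s j t : valid j t -> valid j (t + 1) -> ca1 q s j t ^+ 2 <= 4.
Proof.
move=> h1 h2; have := ca1_b s h1 h2; have := lof_ge (valid_j h1).
move: (lof R j) (ca1 q s j t) => x y hx hxy.
have hx2 : 0 <= x ^+ 2 - 4^-1 by nra.
have := mulr_ge0 hx2 (sqr_ge0 y). nra.
Qed.

Lemma cb0_b' s j t : valid j t -> cb0 q s j t ^+ 2 <= 1.
Proof.
move=> h1; have := cb0_b s h1; have := lof_ge (valid_j h1).
move: (lof R j) (cb0 q s j t) => x y hx hxy.
have hx2 : 0 <= (x + 1) ^+ 2 - 1 by nra.
have := mulr_ge0 hx2 (sqr_ge0 y). nra.
Qed.

Lemma ev_valid w s j t : valid j t -> ev w s j t = w s j t.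
Proof. by rewrite /ev => ->. Qed.

Lemma ev_Dop v s j t : ev (Dop v) s j t = (lof R j + 2^-1)%:C * ev v (~~ s) j t.
Proof. by rewrite /Dop /ev; case: (valid j t) => //; rewrite mulr0. Qed.

Lemma sub1 (t : int) : t - 1 = t + -1. Proof. by []. Qed.

Lemma pi_a_E v : pi_a q v = vadd (vadd
   (shift1 id (fun s j t => ca1 q s j (t - 1)) 0 (-1) v)
   (shift1 id (fun _ j t => ca2 q (j - 1) (t - 1)) (-1) (-1) v))
   (shift1 id (fun _ j t => ca3 q (j + 1) t) 1 0 v).
Proof.
apply: functional_extensionality => s; apply: functional_extensionality => j;
apply: functional_extensionality => t.
rewrite /pi_a /vadd /shift1 !addr0; case: (valid j t) => //; rewrite !addr0 //.
Qed.

Lemma Bnd_pi_a : Bnd (pi_a q).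
Proof.
apply: (Bnd_ext (fun v => esym (pi_a_E v))).
apply: Bnd_add; first apply: Bnd_add.
- apply: (@Bnd_shift1 R _ _ _ _ 4) => //.
  move=> s j t h1; rewrite addr0 => h2; apply: ca1_b' => //; by rewrite subrK.
- apply: (@Bnd_shift1 R _ _ _ _ 1) => //.
  by move=> s j t h1 h2; apply: ca2_b.
- apply: (@Bnd_shift1 R _ _ _ _ 1) => //.
  move=> s j t h1; rewrite addr0 => h2; apply: ca3_b => //; by rewrite addrK.
Qed.


Lemma pi_astar_E v : pi_astar q v = vadd (vadd
   (shift1 id (fun s j t => ca1 q s j t) 0 1 v)
   (shift1 id (fun _ j t => ca2 q j t) 1 1 v))
   (shift1 id (fun _ j t => ca3 q j t) (-1) 0 v).
Proof.
apply: functional_extensionality => s; apply: functional_extensionality => j;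
apply: functional_extensionality => t.
rewrite /pi_astar /vadd /shift1 !addr0; case: (valid j t) => //; rewrite !addr0 //.
Qed.

Lemma pi_b_E v : pi_b q v = vadd (vadd
   (shift1 id (fun s j t => cb0 q s j t) 0 0 v)
   (shift1 id (fun _ j t => cb1 q (j - 1) t) (-1) 0 v))
   (shift1 id (fun _ j t => cb2 q (j + 1) t) 1 0 v).
Proof.
apply: functional_extensionality => s; apply: functional_extensionality => j;
apply: functional_extensionality => t.
rewrite /pi_b /vadd /shift1 !addr0; case: (valid j t) => //; rewrite !addr0 //.
Qed.

Lemma Bnd_pi_astar : Bnd (pi_astar q).
Proof.
apply: (Bnd_ext (fun v => esym (pi_astar_E v))).
apply: Bnd_add; first apply: Bnd_add.
- apply: (@Bnd_shift1 R _ _ _ _ 4) => //.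
  move=> s j t h1; rewrite addr0 => h2; exact: ca1_b'.
- apply: (@Bnd_shift1 R _ _ _ _ 1) => //.
  by move=> s j t h1 h2; apply: ca2_b.
- apply: (@Bnd_shift1 R _ _ _ _ 1) => //.
  move=> s j t h1; rewrite addr0 => h2; exact: ca3_b.
Qed.

Lemma Bnd_pi_b : Bnd (pi_b q).
Proof.
apply: (Bnd_ext (fun v => esym (pi_b_E v))).
apply: Bnd_add; first apply: Bnd_add.
- apply: (@Bnd_shift1 R _ _ _ _ 1) => //.
  move=> s j t h1; rewrite !addr0 => h2; exact: cb0_b'.
- apply: (@Bnd_shift1 R _ _ _ _ 1) => //.
  move=> s j t h1; rewrite addr0 => h2; exact: cb1_b.
- apply: (@Bnd_shift1 R _ _ _ _ 1) => //.
  move=> s j t h1; rewrite addr0 => h2; exact: cb2_b.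
Qed.

Lemma comm_a_E v : commutator (Dop (R:=R)) (pi_a q) v = vadd (vadd
   (shift1 negb (fun s j t => (lof R j + 2^-1) * (ca1 q (~~ s) j (t - 1) - ca1 q s j (t - 1))) 0 (-1) v)
   (shift1 negb (fun _ j t => (lof R j - lof R (j - 1)) * ca2 q (j - 1) (t - 1)) (-1) (-1) v))
   (shift1 negb (fun _ j t => (lof R j - lof R (j + 1)) * ca3 q (j + 1) t) 1 0 v).
Proof.
  apply: functional_extensionality => s; apply: functional_extensionality => j;
  apply: functional_extensionality => t.
  rewrite /commutator /vadd /shift1 {1}/Dop.
  case hv: (valid j t); last by rewrite /pi_a hv; ring.
  rewrite ev_valid // /pi_a hv !ev_Dop !addr0 /=. ring.
Qed.


Lemma c1_bnd (x y : R) : 2^-1 <= x -> x ^+ 2 * y ^+ 2 <= 1 -> ((x + 2^-1) * (- y - y)) ^+ 2 <= 16.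
Proof.
move=> hx hxy.
have h4 : 0 <= 4 * x ^+ 2 - (x + 2^-1) ^+ 2 by nra.
have := mulr_ge0 h4 (sqr_ge0 y). nra.
Qed.

Lemma c0_bnd (x y : R) : 2^-1 <= x -> (x + 1) ^+ 2 * y ^+ 2 <= 1 -> ((x + 2^-1) * (- y - y)) ^+ 2 <= 4.
Proof.
move=> hx hxy.
have h4 : 0 <= (x + 1) ^+ 2 - (x + 2^-1) ^+ 2 by nra.
have := mulr_ge0 h4 (sqr_ge0 y). nra.
Qed.

Lemma Bnd_comm_a : Bnd (commutator (Dop (R:=R)) (pi_a q)).
Proof.
apply: (Bnd_ext (fun v => esym (comm_a_E v))).
apply: Bnd_add; first apply: Bnd_add.
- apply: (@Bnd_shift1 R _ _ _ _ 16) => //; first exact: negb_inj.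
  move=> s j t h1; rewrite addr0 => h2; rewrite ca1_neg.
  apply: c1_bnd; first exact: lof_ge (valid_j h1).
  by apply: ca1_b => //; rewrite subrK.
- apply: (@Bnd_shift1 R _ _ _ _ 1) => //; first exact: negb_inj.
  by move=> s j t h1 h2; rewrite lofB1 mul1r; apply: ca2_b.
- apply: (@Bnd_shift1 R _ _ _ _ 1) => //; first exact: negb_inj.
  move=> s j t h1; rewrite addr0 => h2; rewrite lofD1 mulN1r sqrrN; apply: ca3_b => //; by rewrite addrK.
Qed.

Lemma comm_astar_E v : commutator (Dop (R:=R)) (pi_astar q) v = vadd (vadd
   (shift1 negb (fun s j t => (lof R j + 2^-1) * (ca1 q (~~ s) j t - ca1 q s j t)) 0 1 v)
   (shift1 negb (fun _ j t => (lof R j - lof R (j + 1)) * ca2 q j t) 1 1 v))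
   (shift1 negb (fun _ j t => (lof R j - lof R (j - 1)) * ca3 q j t) (-1) 0 v).
Proof.
  apply: functional_extensionality => s; apply: functional_extensionality => j;
  apply: functional_extensionality => t.
  rewrite /commutator /vadd /shift1 {1}/Dop.
  case hv: (valid j t); last by rewrite /pi_astar hv; ring.
  rewrite ev_valid // /pi_astar hv !ev_Dop !addr0 /=. ring.
Qed.

Lemma Bnd_comm_astar : Bnd (commutator (Dop (R:=R)) (pi_astar q)).
Proof.
apply: (Bnd_ext (fun v => esym (comm_astar_E v))).
apply: Bnd_add; first apply: Bnd_add.
- apply: (@Bnd_shift1 R _ _ _ _ 16) => //; first exact: negb_inj.
  move=> s j t h1; rewrite addr0 => h2; rewrite ca1_neg.
  apply: c1_bnd; first exact: lof_ge (valid_j h1).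
  exact: ca1_b.
- apply: (@Bnd_shift1 R _ _ _ _ 1) => //; first exact: negb_inj.
  by move=> s j t h1 h2; rewrite lofD1 mulN1r sqrrN; apply: ca2_b.
- apply: (@Bnd_shift1 R _ _ _ _ 1) => //; first exact: negb_inj.
  move=> s j t h1; rewrite addr0 => h2; rewrite lofB1 mul1r; exact: ca3_b.
Qed.

Lemma comm_b_E v : commutator (Dop (R:=R)) (pi_b q) v = vadd (vadd
   (shift1 negb (fun s j t => (lof R j + 2^-1) * (cb0 q (~~ s) j t - cb0 q s j t)) 0 0 v)
   (shift1 negb (fun _ j t => (lof R j - lof R (j - 1)) * cb1 q (j - 1) t) (-1) 0 v))
   (shift1 negb (fun _ j t => (lof R j - lof R (j + 1)) * cb2 q (j + 1) t) 1 0 v).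
Proof.
  apply: functional_extensionality => s; apply: functional_extensionality => j;
  apply: functional_extensionality => t.
  rewrite /commutator /vadd /shift1 {1}/Dop.
  case hv: (valid j t); last by rewrite /pi_b hv; ring.
  rewrite ev_valid // /pi_b hv !ev_Dop !addr0 /=. ring.
Qed.

Lemma Bnd_comm_b : Bnd (commutator (Dop (R:=R)) (pi_b q)).
Proof.
apply: (Bnd_ext (fun v => esym (comm_b_E v))).
apply: Bnd_add; first apply: Bnd_add.
- apply: (@Bnd_shift1 R _ _ _ _ 4) => //; first exact: negb_inj.
  move=> s j t h1 _; rewrite cb0_neg.
  apply: c0_bnd; first exact: lof_ge (valid_j h1).
  exact: cb0_b.
- apply: (@Bnd_shift1 R _ _ _ _ 1) => //; first exact: negb_inj.
  move=> s j t h1; rewrite addr0 => h2; rewrite lofB1 mul1r; exact: cb1_b.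
- apply: (@Bnd_shift1 R _ _ _ _ 1) => //; first exact: negb_inj.
  move=> s j t h1; rewrite addr0 => h2; rewrite lofD1 mulN1r sqrrN; exact: cb2_b.
Qed.


Lemma abs2_mul (c z : R[i]) : abs2 (c * z) = abs2 c * abs2 z.
Proof. case: c => a b; case: z => x y /=. ring. Qed.

Lemma Bnd_cmul (c : R[i]) (T : vect R -> vect R) : Bnd T -> Bnd (fun v s j t => c * T v s j t).
Proof.
move=> [k [C [hC H]]]; exists k, (abs2 c * C); split; first exact: mulr_ge0 (abs2_ge0 c) hC.
move=> N v hv; have [f b] := H N v hv; split.
  by move=> s j t hj; rewrite f // mulr0.
move=> M; rewrite -mulrA.
have -> : nsq M (fun s j t => c * T v s j t) = abs2 c * nsq M (T v).
  rewrite /nsq mulr_sumr; apply: eq_bigr => s _; rewrite mulr_sumr; apply: eq_bigr => j _.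
  rewrite mulr_sumr; apply: eq_bigr => i _; exact: abs2_mul.
apply: ler_wpM2l; [exact: abs2_ge0 | exact: b].
Qed.

Lemma scal_E (c : R[i]) v : piS q (Tscal c) v = (fun s j t => c * shift1 id (fun _ _ _ => 1) 0 0 v s j t).
Proof.
apply: functional_extensionality => s; apply: functional_extensionality => j;
apply: functional_extensionality => t.
rewrite /= /shift1 /ev !addr0; case: (valid j t) => /=; last by rewrite mulr0.
by rewrite mul1r.
Qed.

Lemma Bnd_scal (c : R[i]) : Bnd (piS q (Tscal c)).
Proof.
apply: (Bnd_ext (fun v => esym (scal_E c v))); apply: Bnd_cmul.
apply: (@Bnd_shift1 R _ _ _ _ 1) => //.
by move=> *; rewrite expr1n.
Qed.

Lemma Bnd_zero : Bnd (shift1 id (fun _ _ _ => (0 : R)) 0 0).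
Proof. apply: (@Bnd_shift1 R _ _ _ _ 0) => //. by move=> *; rewrite expr0n. Qed.

Lemma comm_scal_E (c : R[i]) v : commutator (Dop (R:=R)) (piS q (Tscal c)) v = shift1 id (fun _ _ _ => (0 : R)) 0 0 v.
Proof.
apply: functional_extensionality => s; apply: functional_extensionality => j;
apply: functional_extensionality => t.
rewrite /commutator /shift1 /= /Dop /ev; case: (valid j t) => /=; ring.
Qed.

Definition vsub (v w : vect R) : vect R := fun s j t => v s j t - w s j t.

Lemma ev_sub v w s j t : ev (vsub v w) s j t = ev v s j t - ev w s j t.
Proof. by rewrite /ev; case: (valid j t) => //; rewrite subr0. Qed.

Lemma piS_sub x v w : piS q x (vsub v w) = vsub (piS q x v) (piS q x w).
Proof.
elim: x v w => [|||c|x1 IH1 x2 IH2|x1 IH1 x2 IH2] v w;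
apply: functional_extensionality => s; apply: functional_extensionality => j;
apply: functional_extensionality => t.
- rewrite /= /pi_a !ev_sub /vsub; case: (valid j t) => /=; ring.
- rewrite /= /pi_astar !ev_sub /vsub; case: (valid j t) => /=; ring.
- rewrite /= /pi_b !ev_sub /vsub; case: (valid j t) => /=; ring.
- rewrite /= /vsub; case: (valid j t) => /=; ring.
- rewrite /= IH1 IH2 /vsub; ring.
- by rewrite /= IH2 IH1.
Qed.

Lemma Dop_add v w : Dop (vadd v w) = vadd (Dop v) (Dop w).
Proof.
apply: functional_extensionality => s; apply: functional_extensionality => j;
apply: functional_extensionality => t.
rewrite /Dop /vadd /ev; case: (valid j t) => /=; ring.
Qed.

Lemma comm_add_E x1 x2 v : commutator (Dop (R:=R)) (piS q (Tadd x1 x2)) v =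
  vadd (commutator (Dop (R:=R)) (piS q x1) v) (commutator (Dop (R:=R)) (piS q x2) v).
Proof.
rewrite /commutator.
have -> : piS q (Tadd x1 x2) v = vadd (piS q x1 v) (piS q x2 v) by [].
rewrite Dop_add.
apply: functional_extensionality => s; apply: functional_extensionality => j;
apply: functional_extensionality => t.
rewrite /vadd /=; ring.
Qed.

Lemma comm_mul_E x1 x2 v : commutator (Dop (R:=R)) (piS q (Tmul x1 x2)) v =
  vadd (commutator (Dop (R:=R)) (piS q x1) (piS q x2 v)) (piS q x1 (commutator (Dop (R:=R)) (piS q x2) v)).
Proof.
have -> : commutator (Dop (R:=R)) (piS q x2) v = vsub (Dop (piS q x2 v)) (piS q x2 (Dop v)) by [].
rewrite piS_sub.
apply: functional_extensionality => s; apply: functional_extensionality => j;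
apply: functional_extensionality => t.
rewrite /commutator /vadd /vsub /=; ring.
Qed.

Lemma Bnd_piS x : Bnd (piS q x).
Proof.
elim: x => [|||c|x1 IH1 x2 IH2|x1 IH1 x2 IH2].
- exact: Bnd_pi_a.
- exact: Bnd_pi_astar.
- exact: Bnd_pi_b.
- exact: Bnd_scal.
- exact: (Bnd_add IH1 IH2).
- exact: (Bnd_comp IH1 IH2).
Qed.

Lemma Bnd_comm x : Bnd (commutator (Dop (R:=R)) (piS q x)).
Proof.
elim: x => [|||c|x1 IH1 x2 IH2|x1 IH1 x2 IH2].
- exact: Bnd_comm_a.
- exact: Bnd_comm_astar.
- exact: Bnd_comm_b.
- apply: (Bnd_ext (fun v => esym (comm_scal_E c v))); exact: Bnd_zero.
- apply: (Bnd_ext (fun v => esym (comm_add_E x1 x2 v))); exact: (Bnd_add IH1 IH2).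
- apply: (Bnd_ext (fun v => esym (comm_mul_E x1 x2 v))).
  apply: Bnd_add; first exact: (Bnd_comp IH1 (Bnd_piS x2)).
  exact: (Bnd_comp (Bnd_piS x1) IH2).
Qed.

End Alg.

Unset Implicit Arguments.

Theorem proposition5 (R : realType) (q : R) (hq0 : 0 < q) (hq1 : q <= 1)
  (x : poly_term R) :
  bounded_op (commutator (Dop (R:=R)) (piS q x)).
Proof.
apply: Bnd_bounded.
apply: Bnd_comm.
- by move=> s j t h1 h2; apply: ca1_bound.
- by move=> j t h1; apply: ca2_bound.
- by move=> j t h1 h2; apply: ca3_bound.
- by move=> s j t h1; apply: cb0_bound.
- by move=> j t h1; apply: cb1_bound.
- by move=> j t h1; apply: cb2_bound.
Qed.
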